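(* Consider the two-layer multi-item order fulfillment problem described in the context with a single FDC ($K=1$), fixed costs $f_0\ge0$, $f_1>0$, and variable costs satisfying $a\le c_{k,t}^i\le b$ for constants $b>a>0$. Let \textsc{Cost-Comparison AdjV-Priority} be the following policy. In each period $t$, for each item $i$, set $\hat m_{1,t}^i=\min\{S_t^i,I_{1,t-1}^i\}$ if $c_{1,t}^i<\sqrt{a/b}\,c_{0,t}^i$ and $\hat m_{1,t}^i=0$ otherwise, and $\hat m_{0,t}^i=S_t^i-\hat m_{1,t}^i$. If \[\sum_{k=0,1}\Big[f_k\,\mathbb{I}\Big(\sum_{i=1}^n\hat m_{k,t}^i>0\Big)+\sum_{i=1}^nc_{k,t}^i\hat m_{k,t}^i\Big]>f_0+\sum_{i=1}^nc_{0,t}^iS_t^i,\] fulfill the whole order from the RDC ($m_{0,t}^i=S_t^i$, $m_{1,t}^i=0$); otherwise set $m_{k,t}^i=\hat m_{k,t}^i$. Then \[\mathfrak R(\textsc{Cost-Comparison AdjV-Priority})\le 1+\max\left\{\frac{f_0}{f_1},\ \sqrt{\frac ba}\right\}.\]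
   Context: Problem with one FDC (index $1$) and one RDC (index $0$, unlimited inventory). The FDC initially holds $I_{1,0}^i\ge0$ units of item $i\in[n]$, never replenished. In periods $t=1,\dots,T$ an order $\boldsymbol S_t=(S_t^i)_i$ of nonnegative integers arrives; after observing it and the variable costs $c_{k,t}^i$, the policy must immediately and irrevocably choose $m_{0,t}^i,m_{1,t}^i\ge0$ with $m_{0,t}^i+m_{1,t}^i=S_t^i$ and $m_{1,t}^i\le I_{1,t-1}^i$, where $I_{1,t}^i=I_{1,0}^i-\sum_{\tau\le t}m_{1,\tau}^i$. Period cost $\sum_{k=0,1}[f_k\mathbb{I}(\sum_im_{k,t}^i>0)+\sum_ic_{k,t}^im_{k,t}^i]$; total cost is the sum over periods. Online policies decide in period $t$ using only fixed costs, initial inventories and orders/variable costs up to $t$ (and the known constants $a,b$). $\mathrm{ALG}(I)$: (expected) total cost; $\mathrm{OPT}(I)$: offline optimal total cost. $\mathfrak R(\mathrm{ALG})$ is the supremum of $\mathrm{ALG}(I)/\mathrm{OPT}(I)$ over all $n,T$, initial inventories, variable costs in $[a,b]$ and order sequences. *)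

(* Defs.v *)
From mathcomp Require Import all_boot all_order all_algebra.
From mathcomp Require Import all_classical all_reals.
Set Implicit Arguments. Unset Strict Implicit. Unset Printing Implicit Defensive.
Import Order.TTheory GRing.Theory Num.Theory.
Local Open Scope classical_set_scope.
Local Open Scope ring_scope.

(* Instance data (one FDC = location 1, one RDC = location 0):
   n items ('I_n), periods t = 0,...,T-1 (paper's t = 1,...,T),
   I0 i = initial FDC inventory of item i,
   ord t i = ordered quantity of item i in period t,
   c0 t i, c1 t i = variable costs at RDC / FDC.
   A decision in period t is given by the FDC shipment m1 : 'I_n -> nat,
   and m0 i = ord t i - m1 i (with m1 i <= ord t i). *)

Section Model.
Variables (R : realType) (n : nat).
Variables (f0 f1 : R).
Variables (ord : nat -> 'I_n -> nat) (c0 c1 : nat -> 'I_n -> R).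

Definition period_cost (t : nat) (m1 : 'I_n -> nat) : R :=
  f0 * ((0 < \sum_(i < n) (ord t i - m1 i))%N)%:R
  + f1 * ((0 < \sum_(i < n) m1 i)%N)%:R
  + \sum_(i < n) (c0 t i * (ord t i - m1 i)%:R + c1 t i * (m1 i)%:R).

Definition plan_cost (T : nat) (m1 : nat -> 'I_n -> nat) : R :=
  \sum_(t < T) period_cost t (m1 t).

(* offline feasibility: m1 <= S, and cumulative FDC shipments never exceed
   the initial inventory (equivalently I_{1,t-1} >= m_{1,t} every period) *)
Definition feasible (I0 : 'I_n -> nat) (T : nat) (m1 : nat -> 'I_n -> nat) : Prop :=
  forall (t : nat) (i : 'I_n), (t < T)%N ->
    (m1 t i <= ord t i)%N /\ (\sum_(tau < t.+1) m1 tau i <= I0 i)%N.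

Definition OPT (I0 : 'I_n -> nat) (T : nat) : R :=
  inf [set plan_cost T m1 | m1 in [set m | feasible I0 T m]].

Variables (a b : R).

Definition hat_m1 (Iprev : 'I_n -> nat) (t : nat) (i : 'I_n) : nat :=
  if c1 t i < Num.sqrt (a / b) * c0 t i then minn (ord t i) (Iprev i) else 0%N.

Definition alg_m1 (Iprev : 'I_n -> nat) (t : nat) : 'I_n -> nat :=
  if period_cost t (hat_m1 Iprev t) > f0 + \sum_(i < n) c0 t i * (ord t i)%:R
  then (fun _ => 0%N) else hat_m1 Iprev t.

Fixpoint alg_inv (I0 : 'I_n -> nat) (k : nat) : 'I_n -> nat :=
  match k with
  | 0 => I0
  | k'.+1 => fun i => (alg_inv I0 k' i - alg_m1 (alg_inv I0 k') k' i)%N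
  end.

Definition alg_plan (I0 : 'I_n -> nat) : nat -> 'I_n -> nat :=
  fun t => alg_m1 (alg_inv I0 t) t.

Definition ALG (I0 : 'I_n -> nat) (T : nat) : R := plan_cost T (alg_plan I0).

End Model.

(* Main.v *)
Require Import Defs.
From mathcomp Require Import all_boot all_order all_algebra.
From mathcomp Require Import all_classical all_reals.
From mathcomp Require Import ring lra zify.
Import Order.TTheory GRing.Theory Num.Theory.
Local Open Scope ring_scope.

Section Scal.
Variables (R : realType) (f0 f1 a b : R).
Hypotheses (hf0 : 0 <= f0) (hf1 : 0 < f1) (ha : 0 < a) (hab : a < b).
Local Notation r := (Num.sqrt (b / a)).
Local Notation th := (Num.sqrt (a / b)).
Local Notation M := (Num.max (f0 / f1) r).

Lemma hb : 0 < b. Proof. exact: lt_trans ha hab. Qed.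

Lemma r_th : r * th = 1.
Proof.
have a0 : a != 0 by rewrite gt_eqF.
have b0 : b != 0 by rewrite gt_eqF // hb.
rewrite -sqrtrM; last exact: divr_ge0 (ltW hb) (ltW ha).
by rewrite mulrA divfK // mulfV // sqrtr1.
Qed.

Lemma r_sq : r * r * a = b.
Proof.
rewrite -expr2 sqr_sqrtr; last exact: divr_ge0 (ltW hb) (ltW ha).
by rewrite divfK // gt_eqF.
Qed.

Lemma r_ge1 : 1 <= r.
Proof.
rewrite -sqrtr1 ler_sqrt; last exact: divr_ge0 (ltW hb) (ltW ha).
by rewrite ler_pdivlMr // mul1r; exact: ltW.
Qed.

Lemma th_ge0 : 0 <= th.
Proof. exact: sqrtr_ge0. Qed.

Lemma M_ge_r : r <= M.
Proof. by rewrite le_max lexx orbT. Qed.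

Lemma M_f : f0 <= M * f1.
Proof.
have : f0 / f1 <= M by rewrite le_max lexx.
by rewrite ler_pdivrMr.
Qed.

Lemma cheap_gt (c0 c1 : R) : c1 < th * c0 -> r * c1 < c0.
Proof.
move=> h. have r0 : 0 < r by have := r_ge1; lra.
have h' : r * c1 < r * (th * c0) by rewrite ltr_pM2l.
by rewrite mulrA r_th mul1r in h'.
Qed.

Lemma ncheap_le (c0 c1 : R) : ~~ (c1 < th * c0) -> c0 <= r * c1.
Proof.
rewrite -leNgt => h. have r0 : 0 <= r by have := r_ge1; lra.
have h' : r * (th * c0) <= r * c1 by rewrite ler_wpM2l.
by rewrite mulrA r_th mul1r in h'.
Qed.

Lemma key (c0 c1 : R) : a <= c1 -> c1 < th * c0 -> c1 + b <= (1 + r) * c0.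
Proof.
move=> h1 h2. have h3 := @cheap_gt c0 c1 h2. have hr := r_ge1. have hrt := r_th.
have hsq := r_sq. have ht := th_ge0.
have thle : th <= 1 by nra.
have c0ra : r * a <= c0.
  have : r * a <= r * c1 by apply: ler_wpM2l; lra.
  lra.
have P : 0 <= (1 + r - th) * (c0 - r * a) by apply: mulr_ge0; lra.
have tra : th * r * a = a by rewrite (mulrC th r) hrt mul1r.
have e1 : (1 + r - th) * (c0 - r * a) = c0 + r*c0 - th*c0 - r*a - r*r*a + th*r*a by ring.
rewrite hsq tra in e1.
rewrite mulrDl mul1r.
have := ler_wpM2r (ltW ha) hr; rewrite mul1r => ?.
lra.
Qed.

Lemma M_ge0 : 0 <= M.
Proof. have := M_ge_r; have := r_ge1; lra. Qed.

Lemma item_ineq (c0 c1 : R) (S I z : nat) : a <= c0 <= b -> a <= c1 <= b -> (z <= S)%N ->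
  c0 * (S - (if c1 < th * c0 then minn S I else 0%N))%:R
  + c1 * (if c1 < th * c0 then minn S I else 0%N)%:R
  + b * ((if c1 < th * c0 then minn S I else 0%N) - z)%:R
  <= (1 + M) * (c0 * (S - z)%:R + c1 * z%:R)
     + b * (if c1 < th * c0 then (z - minn S I)%N else 0%N)%:R.
Proof.
move=> /andP[h0a h0b] /andP[h1a h1b] hzS.
have hM := M_ge_r. have hr := r_ge1. have hM0 := M_ge0.
have hz0 : 0 <= (z%:R : R) by rewrite ler0n.
have c00 : 0 <= c0 by exact: le_trans (ltW ha) h0a.
have c10 : 0 <= c1 by exact: le_trans (ltW ha) h1a.
have Mr : 0 <= M - r by rewrite subr_ge0.
case: ifP => hc.
- have hS : (minn S I <= S)%N by rewrite geq_minl.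
  set h := minn S I in hS *.
  have hk := @key c0 c1 h1a hc.
  case: (leqP z h) => hzh.
  + have -> : (z - h = 0)%N by apply/eqP; rewrite subn_eq0.
    rewrite !natrB // mulr0 addr0.
    have hh0 : 0 <= (h%:R : R) by rewrite ler0n.
    have hzh' : (z%:R : R) <= h%:R by rewrite ler_nat.
    have hhS : (h%:R : R) <= S%:R by rewrite ler_nat.
    set s := (S%:R : R) in hhS *; set hh := (h%:R : R) in hh0 hzh' hhS *; set zz := (z%:R : R) in hz0 hzh' *.
    have p1 : 0 <= (hh - zz) * ((1 + r) * c0 - c1 - b) by apply: mulr_ge0; lra.
    have p2 : 0 <= (M - r) * c0 * (hh - zz) by apply: mulr_ge0; [apply: mulr_ge0|]; (done || lra).
    have p3 : 0 <= M * c0 * (s - hh) by apply: mulr_ge0; [apply: mulr_ge0|]; (done || lra).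
    have p4 : 0 <= M * c1 * zz by apply: mulr_ge0; [apply: mulr_ge0|]; (done || lra).
    nra.
  + have -> : (h - z = 0)%N by apply/eqP; rewrite subn_eq0 ltnW.
    have hhz : (h <= z)%N by rewrite ltnW.
    rewrite !natrB // mulr0 addr0.
    have hh0 : 0 <= (h%:R : R) by rewrite ler0n.
    have hzh' : (h%:R : R) <= z%:R by rewrite ler_nat.
    have hzS' : (z%:R : R) <= S%:R by rewrite ler_nat.
    set s := (S%:R : R) in hzS' *; set hh := (h%:R : R) in hh0 hzh' *; set zz := (z%:R : R) in hz0 hzh' hzS' *.
    have p1 : 0 <= (zz - hh) * (b - c0) by apply: mulr_ge0; lra.
    have p3 : 0 <= M * c0 * (s - zz) by apply: mulr_ge0; [apply: mulr_ge0|]; (done || lra).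
    have p4 : 0 <= M * c1 * zz by apply: mulr_ge0; [apply: mulr_ge0|]; (done || lra).
    have p5 : 0 <= c1 * (zz - hh) by apply: mulr_ge0; lra.
    nra.
- have hk := @ncheap_le c0 c1 (negbT hc).
  rewrite !subn0 sub0n !mulr0 !addr0 natrB //.
  have hzS' : (z%:R : R) <= S%:R by rewrite ler_nat.
  set s := (S%:R : R) in hzS' *; set zz := (z%:R : R) in hz0 hzS' *.
  have p1 : 0 <= zz * (r * c1 - c0) by apply: mulr_ge0; lra.
  have p2 : 0 <= (M - r) * c1 * zz by apply: mulr_ge0; [apply: mulr_ge0|]; (done || lra).
  have p3 : 0 <= M * c0 * (s - zz) by apply: mulr_ge0; [apply: mulr_ge0|]; (done || lra).
  have p4 : 0 <= c1 * zz by apply: mulr_ge0; lra.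
  nra.
Qed.

Variables (n : nat) (ord : nat -> 'I_n -> nat) (c0 c1 : nat -> 'I_n -> R).
Local Notation P := (period_cost f0 f1 ord c0 c1).
Local Notation hat := (hat_m1 ord c0 c1 a b).
Local Notation alg := (alg_m1 f0 f1 ord c0 c1 a b).

Lemma P_ext t (m m' : 'I_n -> nat) : (forall i, m i = m' i) -> P t m = P t m'.
Proof. by move=> e; have -> : m = m' by apply: boolp.funext. Qed.

Lemma P_ge0 t m : (forall i, a <= c0 t i <= b /\ a <= c1 t i <= b) -> 0 <= P t m.
Proof.
move=> hc; rewrite /period_cost.
have hf1' := ltW hf1.
apply: addr_ge0; first apply: addr_ge0; try (apply: mulr_ge0 => //; exact: ler0n).
apply: sumr_ge0 => i _; have [/andP[h1 _] /andP[h2 _]] := hc i.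
apply: addr_ge0; apply: mulr_ge0; rewrite ?ler0n //; exact: le_trans (ltW ha) _.
Qed.

Lemma P0E t : (0 < \sum_(i < n) ord t i)%N ->
  P t (fun _ => 0%N) = f0 + \sum_(i < n) c0 t i * (ord t i)%:R.
Proof.
move=> hS; rewrite /period_cost.
under eq_bigr do rewrite subn0.
rewrite hS big1 // mulr1 mulr0 addr0; congr (_ + _).
by apply: eq_bigr => i _; rewrite subn0 mulr0 addr0.
Qed.

Lemma hat_le t Iprev i : (hat Iprev t i <= ord t i)%N.
Proof. rewrite /hat_m1; case: ifP => _ //; exact: geq_minl. Qed.

Lemma alg_le_hat t Iprev i : (alg Iprev t i <= hat Iprev t i)%N.
Proof. rewrite /alg_m1; case: ifP => _ //. Qed.

Lemma ind_le (bb : bool) (f : R) : 0 <= f -> f * (bb : nat)%:R <= f.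
Proof. by case: bb => h; rewrite ?mulr1 ?mulr0. Qed.

Lemma ind_ge0 (bb : bool) (f : R) : 0 <= f -> 0 <= f * (bb : nat)%:R.
Proof. by move=> h; apply: mulr_ge0 => //; exact: ler0n. Qed.

Lemma sum0_each (F : 'I_n -> nat) : (\sum_(i < n) F i = 0)%N -> forall i, F i = 0%N.
Proof.
move=> h i; have : (F i <= \sum_(j < n) F j)%N by rewrite (bigD1 i) //= leq_addr.
by rewrite h leqn0 => /eqP.
Qed.

Lemma per_period t Iprev (z : 'I_n -> nat) :
  (forall i, a <= c0 t i <= b /\ a <= c1 t i <= b) -> (forall i, z i <= ord t i)%N ->
  P t (alg Iprev t) + b * \sum_(i < n) ((alg Iprev t i - z i)%N)%:R
  <= (1 + M) * P t z + b * \sum_(i < n)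
       (if c1 t i < th * c0 t i then (z i - minn (ord t i) (Iprev i))%N else 0%N)%:R.
Proof.
move=> hc hz.
have hM0 := M_ge0. have hb0 := ltW hb.
set D := \sum_(i < n) (if _ then _ else _)%:R.
have D0 : 0 <= D by apply: sumr_ge0 => i _; exact: ler0n.
have Pz0 := @P_ge0 t z hc.
have bD0 : 0 <= b * D by apply: mulr_ge0.
have MP0 : 0 <= M * P t z by apply: mulr_ge0.
case: (posnP (\sum_(i < n) ord t i)) => hS.
  have S0 := @sum0_each _ hS.
  have y0 i : alg Iprev t i = 0%N.
    by apply/eqP; rewrite -leqn0 -(S0 i); apply: leq_trans (alg_le_hat _ _ _) (hat_le _ _ _).
  have z0 i : z i = 0%N by apply/eqP; rewrite -leqn0 -(S0 i).
  rewrite (@P_ext t (alg Iprev t) z); last by move=> i; rewrite y0 z0.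
  rewrite big1 ?mulr0 ?addr0; last by move=> i _; rewrite y0.
  rewrite mulrDl mul1r. lra.
have P0 := P0E t hS.
have SC0 : 0 <= \sum_(i < n) c0 t i * (ord t i)%:R.
  apply: sumr_ge0 => i _; apply: mulr_ge0; last exact: ler0n.
  have [/andP[h1 _] _] := hc i; exact: le_trans (ltW ha) h1.
case: (posnP (\sum_(i < n) z i)) => hZ.
  have z0 := @sum0_each _ hZ.
  rewrite (@P_ext t z (fun _ => 0%N)) // P0.
  have -> : D = 0.
    rewrite /D big1 // => i _; rewrite z0 sub0n; by case: ifP.
  rewrite mulr0 addr0.
  under eq_bigr do rewrite z0 subn0.
  rewrite /alg_m1; case: ifP => hcmp.
    rewrite [X in b * X]big1 // mulr0 addr0 P0 mulrDl mul1r.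
    have : 0 <= M * (f0 + \sum_(i < n) c0 t i * (ord t i)%:R) by apply: mulr_ge0 => //; exact: addr_ge0.
    lra.
  move: hcmp; rewrite ltNge => /negbFE hle.
  have bh : b * \sum_(i < n) (hat Iprev t i)%:R <= M * \sum_(i < n) c0 t i * (ord t i)%:R.
    have -> : M * \sum_(i < n) c0 t i * (ord t i)%:R = \sum_(i < n) M * (c0 t i * (ord t i)%:R) by rewrite mulr_sumr.
    rewrite mulr_sumr; apply: ler_sum => i _.
    have [/andP[h1 h1'] /andP[h2 h2']] := hc i.
    have hr := r_ge1.
    have c00 : 0 <= c0 t i by exact: le_trans (ltW ha) h1.
    rewrite /hat_m1; case: ifP => hch; last first.
      rewrite mulr0; apply: mulr_ge0 => //; apply: mulr_ge0 => //; exact: ler0n.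
    have hg := @cheap_gt (c0 t i) (c1 t i) hch.
    have hsq := r_sq.
    have brc : b <= M * c0 t i.
      have p1 : r * r * a <= r * c1 t i * r by nra.
      have p2 : r * c1 t i * r <= r * c0 t i by rewrite (mulrC r (c0 t i)) ler_wpM2r //; [lra | exact: ltW].
      have p3 : r * c0 t i <= M * c0 t i by rewrite ler_wpM2r // M_ge_r.
      lra.
    have hmS : ((minn (ord t i) (Iprev i))%:R <= (ord t i)%:R :> R) by rewrite ler_nat geq_minl.
    have hm0 : (0 <= (minn (ord t i) (Iprev i))%:R :> R) by exact: ler0n.
    set m := ((minn (ord t i) (Iprev i))%:R : R) in hmS hm0 *.
    set s := ((ord t i)%:R : R) in hmS *.
    have q1 : b * m <= M * c0 t i * m by rewrite ler_wpM2r.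
    have q2 : M * c0 t i * m <= M * c0 t i * s by rewrite ler_wpM2l //; apply: mulr_ge0.
    rewrite mulrA; lra.
  have : 0 <= M * f0 by apply: mulr_ge0.
  rewrite mulrDl mul1r mulrDr.
  lra.
have hPy : P t (alg Iprev t) <= P t (hat Iprev t).
  rewrite /alg_m1; case: ifP => hcmp //.
  rewrite P0; exact: ltW.
have hK : \sum_(i < n) ((alg Iprev t i - z i)%N)%:R <= \sum_(i < n) ((hat Iprev t i - z i)%N)%:R :> R.
  apply: ler_sum => i _; rewrite ler_nat; apply: leq_sub2r; exact: alg_le_hat.
have hbK := ler_wpM2l hb0 hK.
have hPh : P t (hat Iprev t) <= f0 + f1 + \sum_(i < n) (c0 t i * (ord t i - hat Iprev t i)%:R + c1 t i * (hat Iprev t i)%:R).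
  rewrite /period_cost -!addrA lerD //; first exact: ind_le.
  rewrite lerD //; exact: ind_le (ltW hf1).
have hPz : P t z = f0 * ((0 < \sum_(i < n) (ord t i - z i))%N : nat)%:R + f1 + \sum_(i < n) (c0 t i * (ord t i - z i)%:R + c1 t i * (z i)%:R).
  by rewrite /period_cost hZ mulr1.
have hx := @ind_ge0 (0 < \sum_(i < n) (ord t i - z i))%N f0 hf0.
set x := f0 * _ in hPz hx.
have hV : \sum_(i < n) (c0 t i * (ord t i - hat Iprev t i)%:R + c1 t i * (hat Iprev t i)%:R)
   + b * \sum_(i < n) ((hat Iprev t i - z i)%N)%:R
   <= (1 + M) * \sum_(i < n) (c0 t i * (ord t i - z i)%:R + c1 t i * (z i)%:R) + b * D.
  rewrite /D !mulr_sumr -!big_split; apply: ler_sum => i _ /=.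
  have [h1 h2] := hc i.
  rewrite /hat_m1; exact: item_ineq.
set VH := \sum_(i < n) (c0 t i * _ + _) in hPh hV.
set VZ := \sum_(i < n) (c0 t i * _ + _) in hPz hV.
have hMf := M_f.
have : 0 <= M * x by apply: mulr_ge0.
rewrite hPz !mulrDl !mul1r !mulrDr.
lra.
Qed.

Lemma alg_le_inv t Iprev i : (alg Iprev t i <= Iprev i)%N.
Proof.
apply: leq_trans (alg_le_hat _ _ _) _; rewrite /hat_m1; case: ifP => _ //; exact: geq_minr.
Qed.

Lemma count_lemma (I0 : 'I_n -> nat) T (z : nat -> 'I_n -> nat) i :
  feasible ord I0 T z ->
  (\sum_(t < T) (if (c1 t i < th * c0 t i)%R
       then (z t i - minn (ord t i) (alg_inv f0 f1 ord c0 c1 a b I0 t i))%N else 0%N)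
   <= \sum_(t < T) (alg_plan f0 f1 ord c0 c1 a b I0 t i - z t i))%N.
Proof.
move=> hf.
suff H : forall k, (k <= T)%N ->
  (\sum_(t < k) (if (c1 t i < th * c0 t i)%R
       then (z t i - minn (ord t i) (alg_inv f0 f1 ord c0 c1 a b I0 t i))%N else 0%N)
   + ((I0 i - \sum_(t < k) z t i) - alg_inv f0 f1 ord c0 c1 a b I0 k i)
   <= \sum_(t < k) (alg_plan f0 f1 ord c0 c1 a b I0 t i - z t i))%N.
  by apply: leq_trans (H T (leqnn T)); rewrite leq_addr.
elim=> [|k IH] hk; first by rewrite !big_ord0 /= subn0 subnn.
have {IH} IH := IH (ltnW hk).
have [hzS hsum] := hf k i hk.
rewrite !big_ord_recr /=.
have hy : (alg_plan f0 f1 ord c0 c1 a b I0 k i <= alg_inv f0 f1 ord c0 c1 a b I0 k i)%N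
  by exact: alg_le_inv.
have hsum' : (\sum_(t < k) z t i + z k i <= I0 i)%N by rewrite big_ord_recr /= in hsum.
rewrite /alg_plan in hy *.
move: IH hy hsum' hzS.
rewrite /alg_plan.
set SD := \sum_(t < k) (if _ then _ else _).
set SK := \sum_(t < k) (_ - _)%N.
set SZ := \sum_(t < k) z t i.
set Ik := alg_inv _ _ _ _ _ _ _ _ k i.
set yk := alg _ k i.
case: ifP => _; lia.
Qed.

Lemma main_bound (I0 : 'I_n -> nat) T (z : nat -> 'I_n -> nat) :
  (forall (t : nat) (i : 'I_n), (t < T)%N -> a <= c0 t i <= b /\ a <= c1 t i <= b) ->
  feasible ord I0 T z ->
  ALG f0 f1 ord c0 c1 a b I0 T <= (1 + M) * plan_cost f0 f1 ord c0 c1 T z.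
Proof.
move=> hc hf.
have hb0 := ltW hb.
set dl := fun (t : nat) (i : 'I_n) => (if c1 t i < th * c0 t i
       then (z t i - minn (ord t i) (alg_inv f0 f1 ord c0 c1 a b I0 t i))%N else 0%N).
set kp := fun (t : nat) (i : 'I_n) => (alg_plan f0 f1 ord c0 c1 a b I0 t i - z t i)%N.
have H1 : \sum_(t < T) (P t (alg_plan f0 f1 ord c0 c1 a b I0 t) + b * \sum_(i < n) (kp t i)%:R)
   <= \sum_(t < T) ((1 + M) * P t (z t) + b * \sum_(i < n) (dl t i)%:R).
  apply: ler_sum => t _.
  apply: per_period; first by move=> i; exact: hc.
  by move=> i; have [] := hf t i (ltn_ord t).
have H2 : \sum_(t < T) b * \sum_(i < n) ((dl t i)%:R : R) <= \sum_(t < T) b * \sum_(i < n) ((kp t i)%:R : R).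
  rewrite -!mulr_sumr; apply: ler_wpM2l => //.
  rewrite exchange_big [leRHS]exchange_big /=.
  apply: ler_sum => i _.
  rewrite -!natr_sum ler_nat.
  exact: count_lemma.
move: H1 H2; rewrite big_split [X in _ <= X]big_split /= => H1 H2.
rewrite /ALG /plan_cost mulr_sumr.
lra.
Qed.
End Scal.

Theorem theorem5 (R : realType) (f0 f1 a b : R) :
  0 <= f0 -> 0 < f1 -> 0 < a -> a < b ->
  forall (n T : nat) (I0 : 'I_n -> nat) (ord : nat -> 'I_n -> nat)
         (c0 c1 : nat -> 'I_n -> R),
    (forall (t : nat) (i : 'I_n), (t < T)%N ->
       a <= c0 t i <= b /\ a <= c1 t i <= b) ->
    ALG f0 f1 ord c0 c1 a b I0 T
      <= (1 + Num.max (f0 / f1) (Num.sqrt (b / a))) * OPT f0 f1 ord c0 c1 I0 T.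
Proof.
move=> hf0 hf1 ha hab n T I0 ord c0 c1 hc.
set M := Num.max (f0 / f1) (Num.sqrt (b / a)).
have hM : 0 < 1 + M.
  have := @M_ge0 R f0 f1 a b ha hab; rewrite -/M => h.
  by apply: lt_le_trans (ltr01) _; rewrite lerDl.
rewrite -ler_pdivrMl //.
apply: lb_le_inf.
  exists (plan_cost f0 f1 ord c0 c1 T (fun _ _ => 0%N)).
  exists (fun _ _ => 0%N) => //.
  move=> t i _; split => //; by rewrite big1.
move=> _ [z hz <-].
rewrite ler_pdivrMl //.
exact: main_bound.
Qed.
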